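(* For all positive integers $m,n$, the cyclic simplicial rook graph $\mathcal{CSR}(m,n)$ is a Cayley graph.
   Context: For positive integers $m,n$, the cyclic simplicial rook graph $\mathcal{CSR}(m,n)$ is the graph whose vertices are the vectors $(a_1,\dots,a_m)\in\mathbb{Z}_n^m$ with $a_1+\cdots+a_m\equiv 0 \pmod n$, two vertices being adjacent if and only if their vectors differ in exactly two coordinates. For a group $\Gamma$ and a subset $S\subseteq\Gamma$ closed under inverses and not containing the identity, the Cayley graph $\mathrm{Cay}(\Gamma,S)$ has vertex set $\Gamma$, with $x,y$ adjacent iff $x^{-1}y\in S$. A graph is a Cayley graph if it is isomorphic to some $\mathrm{Cay}(\Gamma,S)$. *)

(* Defs.v *)
From HB Require Import structures.
From mathcomp Require Import all_boot all_fingroup.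
Set Implicit Arguments. Unset Strict Implicit. Unset Printing Implicit Defensive.

(* Z_n is represented by 'I_n with arithmetic taken modulo n (n >= 1).      *)
Definition csr_vertex (m n : nat) : Type :=
  {a : {ffun 'I_m -> 'I_n} | (\sum_(i < m) (a i : nat)) %% n == 0}.

Definition csr_adj (m n : nat) (u v : csr_vertex m n) : bool :=
  #|[set i : 'I_m | val u i != val v i]| == 2.

(* A (finite) graph (V, adj) is a Cayley graph if it is isomorphic to
   Cay(Gamma, S) for some group Gamma and inverse-closed S not containing 1;
   in Cay(Gamma,S), x ~ y iff x^-1 * y \in S. *)
Definition is_cayley_graph (V : finType) (adj : rel V) : Prop :=
  exists (gT : finGroupType) (S : {set gT}) (f : V -> gT),
    [/\ bijective f,
        (1 \notin S)%g,
        (forall x, x \in S -> (x^-1)%g \in S)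
      & forall u v, adj u v = (((f u)^-1 * f v)%g \in S)].

(* Main.v *)
Require Import Defs.
From HB Require Import structures.
From mathcomp Require Import all_boot all_fingroup.
From mathcomp Require Import zmodp zify.
Set Implicit Arguments. Unset Strict Implicit. Unset Printing Implicit Defensive.

Section Grp.
Variables m n : nat.
Local Notation p := n.+1.
Local Notation F := {ffun 'I_m -> 'I_p}.
Definition okv (a : F) := (\sum_(i < m) (a i : nat)) %% p == 0.

Definition vadd (u v : F) : F := [ffun i => Zp_add (u i) (v i)].
Definition vopp (u : F) : F := [ffun i => Zp_opp (u i)].
Definition vzero : F := [ffun => Zp0].

Lemma okv_add u v : okv u -> okv v -> okv (vadd u v).
Proof.
rewrite /okv => /eqP hu /eqP hv; apply/eqP.
rewrite -modn_summ.
under eq_bigr => i _ do rewrite ffunE /= modn_mod.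
by rewrite modn_summ big_split /= -modnDm hu hv.
Qed.

Lemma okv_opp u : okv u -> okv (vopp u).
Proof.
rewrite /okv => /eqP hu; apply/eqP.
have h : (\sum_(i < m) (vopp u i : nat) + \sum_(i < m) (u i : nat)) %% p = 0.
  rewrite -big_split /= -modn_summ.
  rewrite (eq_bigr (fun _ => 0)) ?big1 // => i _.
  by rewrite ffunE /= modnDml subnK ?modnn // ltnW.
by rewrite -modnDmr hu addn0 in h.
Qed.

Lemma okv_zero : okv vzero.
Proof. by rewrite /okv big1 // => i _; rewrite ffunE. Qed.

Definition G := csr_vertex m p.
HB.instance Definition _ := Finite.on G.

Definition gmul (x y : G) : G := exist _ (vadd (val x) (val y)) (okv_add (valP x) (valP y)).
Definition ginv (x : G) : G := exist _ (vopp (val x)) (okv_opp (valP x)).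
Definition gone : G := exist _ vzero okv_zero.

Lemma gmulA : associative gmul.
Proof. by move=> x y z; apply: val_inj; apply/ffunP => i; rewrite !ffunE Zp_addA. Qed.
Lemma gmul1 : left_id gone gmul.
Proof. by move=> x; apply: val_inj; apply/ffunP => i; rewrite !ffunE Zp_add0z. Qed.
Lemma gmulV : left_inverse gone ginv gmul.
Proof. by move=> x; apply: val_inj; apply/ffunP => i; rewrite !ffunE Zp_addNz. Qed.

HB.instance Definition _ := Finite_isGroup.Build G gmulA gmul1 gmulV.

Lemma mulE (x y : G) : (x * y)%g = gmul x y. Proof. by []. Qed.
Lemma invE (x : G) : (x^-1)%g = ginv x. Proof. by []. Qed.
Lemma oneE : (1 : G)%g = gone. Proof. by []. Qed.

Definition S : {set G} := [set x : G | #|[set i : 'I_m | val x i != Zp0]| == 2].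

Lemma cayley : is_cayley_graph (@csr_adj m p).
Proof.
exists G, S, id; split.
- by exists id.
- rewrite oneE inE /=.
  suff -> : [set i : 'I_m | vzero i != Zp0] = set0 by rewrite cards0.
  by apply/setP => i; rewrite !inE ffunE eqxx.
- move=> x; rewrite invE !inE /=.
  suff -> : [set i : 'I_m | vopp (val x) i != Zp0] = [set i | val x i != Zp0] by [].
  apply/setP => i; rewrite !inE ffunE; congr negb.
  apply/eqP/eqP => h.
    apply: val_inj; move: h => /(congr1 val) /=.
    case: (val x i) => [[|k] hk] //=; rewrite modn_small; lia.
  by rewrite h; apply: val_inj; rewrite /= subn0 modnn.
- move=> u v; rewrite /csr_adj mulE invE inE /=.
  suff -> : [set i : 'I_m | vadd (vopp (val u)) (val v) i != Zp0] =
            [set i | val u i != val v i] by [].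
  apply/setP => i; rewrite !inE !ffunE; congr negb.
  apply/eqP/eqP => h.
    rewrite -[val v i]Zp_add0z -(Zp_addNz (val u i)) [Zp_add (Zp_opp _) _]Zp_addC -Zp_addA h.
    by rewrite Zp_addC Zp_add0z.
  by rewrite h Zp_addNz.
Qed.
End Grp.

Theorem lemma2 (m n : nat) (hm : 0 < m) (hn : 0 < n) :
  is_cayley_graph (@csr_adj m n).
Proof.
case: n hn => // n _; exact: cayley.
Qed.
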